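(* Let $M'$ be a $4m$-dimensional quaternionic space form of constant quaternionic sectional curvature $4c$, endowed with a Ricci quarter-symmetric metric connection $\nabla''$ (in the setting described in the context), and let $N'$ be an $n$-dimensional submanifold of $M'$ with the induced connection. Then at every point $p\in N'$ the scalar curvature $\tau$ of $N'$ satisfies $$\tau(p)\le \frac{n-1}{2}\left(n\|H\|^2+c\Big\{(n-1)+3\sum_{k=1}^{3}\frac{\|P_k\|^2}{n}\Big\}\frac{n-2\,\operatorname{tr}M\,(n-1)}{n-1}\right).$$
   Context: Let $(M',g)$ be a $4m$-dimensional quaternionic Kaehler manifold with local almost Hermitian structures $\psi_1,\psi_2,\psi_3$ ($\psi_i^2=-I$, $\psi_1\psi_2=\psi_3=-\psi_2\psi_1$ and cyclically) which is a quaternionic space form of constant quaternionic sectional curvature $4c$, i.e. its Levi-Civita connection $\nabla^*$ has curvature $R^*(X,Y)Z=c\{g(Y,Z)X-g(X,Z)Y+\sum_{i=1}^3(g(\psi_iY,Z)\psi_iX-g(\psi_iX,Z)\psi_iY-2g(\psi_iX,Y)\psi_iZ)\}$. $M'$ carries the Ricci quarter-symmetric metric connection $\nabla''_XY=\nabla^*_XY+\eta(Y)LX-S(X,Y)P$, where $S$ is the Ricci tensor of $\nabla^*$, $L$ is the $(1,1)$-tensor with $g(LX,Y)=S(X,Y)$, $\eta$ is a 1-form and $P$ the unit vector field with $g(P,X)=\eta(X)$. Put $QX=\nabla^*_XP-\eta(LX)P+\tfrac12\eta(P)LX$ and $M(X,Y)=g(QX,Y)$. $N'$ is an $n$-dimensional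 submanifold with induced connection $\nabla$ (curvature $R$) and second fundamental form $h$; $\{e_1,\dots,e_n\}$ and $\{e_{n+1},\dots,e_{4m}\}$ are orthonormal bases of $T_pN'$ and $T_p^\perp N'$. Write $\psi_kX=P_kX+F_kX$ (tangential and normal parts), $\|P_k\|^2=\sum_{i,j=1}^n g(P_ke_i,e_j)^2$, and $\operatorname{tr}M=\sum_{i=1}^n M(e_i,e_i)$ (denoted $m$ in the paper). Following the paper's standing assumption $S=(\tau'/n)g$, the curvature of $\nabla''$ is $R''(X,Y)Z=R^*(X,Y)Z-\frac{\tau'}{n}\{M(Y,Z)X-M(X,Z)Y+g(Y,Z)QX-g(X,Z)QY\}$ with $\tau'=c\{n(n-1)+3\sum_{k=1}^3\|P_k\|^2\}$, and the Gauss equation $g(R''(X,Y)Z,W)=g(R(X,Y)Z,W)+g(h(X,Z),h(Y,W))-g(h(X,W),h(Y,Z))$ holds for tangent $X,Y,Z,W$. The sectional curvature is $K(e_i\wedge e_j)=g(R(e_i,e_j)e_j,e_i)$, the scalar curvature $\tau(p)=\sum_{1\le i<j\le n}K(e_i\wedge e_j)$, and the mean curvature vector $H=\frac1n\sum_{i=1}^n h(e_i,e_i)$. *)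

(* Defs.v *)
(* Pointwise (linear-algebraic) model of the setting at p:
   T_p M' = column vectors 'cV[R]_(4m) with the standard inner product g. *)
From HB Require Import structures.
From mathcomp Require Import all_boot all_order all_algebra.
Set Implicit Arguments. Unset Strict Implicit. Unset Printing Implicit Defensive.
Import Order.TTheory GRing.Theory Num.Theory.
Local Open Scope ring_scope.

Definition gdot (R : realFieldType) (N : nat) (X Y : 'cV[R]_N) : R := (X^T *m Y) 0 0.

Definition Rstar (R : realFieldType) (N : nat) (c : R) (p1 p2 p3 : 'M[R]_N)
    (X Y Z : 'cV[R]_N) : 'cV[R]_N :=
  c *: (gdot Y Z *: X - gdot X Z *: Y +
        \sum_(psi <- [:: p1; p2; p3])
          (gdot (psi *m Y) Z *: (psi *m X) - gdot (psi *m X) Z *: (psi *m Y)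
           - (2 * gdot (psi *m X) Y) *: (psi *m Z))).

(* ||P_k||^2 = sum_{i,j} g(P_k e_i, e_j)^2 ; since e_j is tangent,
   g(P_k e_i, e_j) = g(psi_k e_i, e_j). *)
Definition normP2 (R : realFieldType) (N n : nat) (e : 'I_n -> 'cV[R]_N)
    (psi : 'M[R]_N) : R :=
  \sum_(i < n) \sum_(j < n) (gdot (psi *m e i) (e j)) ^+ 2.

Definition tauprime (R : realFieldType) (N n : nat) (c : R) (e : 'I_n -> 'cV[R]_N)
    (p1 p2 p3 : 'M[R]_N) : R :=
  c * (n%:R * (n%:R - 1) + 3 * (normP2 e p1 + normP2 e p2 + normP2 e p3)).

(* Q X = nabla*_X P - eta(L X) P + 1/2 eta(P) L X, with L = (tau'/n) Id
   (standing assumption S = (tau'/n) g) and eta = g(P, .);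
   DP is the endomorphism X |-> nabla*_X P at p. *)
Definition Qop (R : realFieldType) (N : nat) (n : nat) (tp : R) (P : 'cV[R]_N)
    (DP : 'M[R]_N) (X : 'cV[R]_N) : 'cV[R]_N :=
  DP *m X - gdot P ((tp / n%:R) *: X) *: P + (2^-1 * gdot P P) *: ((tp / n%:R) *: X).

Definition Mform (R : realFieldType) (N : nat) (n : nat) (tp : R) (P : 'cV[R]_N)
    (DP : 'M[R]_N) (X Y : 'cV[R]_N) : R :=
  gdot (Qop n tp P DP X) Y.

Definition Rdd (R : realFieldType) (N : nat) (n : nat) (c tp : R)
    (p1 p2 p3 : 'M[R]_N) (P : 'cV[R]_N) (DP : 'M[R]_N)
    (X Y Z : 'cV[R]_N) : 'cV[R]_N :=
  Rstar c p1 p2 p3 X Y Z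
  - (tp / n%:R) *: (Mform n tp P DP Y Z *: X - Mform n tp P DP X Z *: Y
                    + gdot Y Z *: Qop n tp P DP X - gdot X Z *: Qop n tp P DP Y).

Definition trM (R : realFieldType) (N n : nat) (tp : R) (P : 'cV[R]_N)
    (DP : 'M[R]_N) (e : 'I_n -> 'cV[R]_N) : R :=
  \sum_(i < n) Mform n tp P DP (e i) (e i).

Definition meanH (R : realFieldType) (N n : nat) (h : 'I_n -> 'I_n -> 'cV[R]_N)
    : 'cV[R]_N :=
  n%:R^-1 *: \sum_(i < n) h i i.

(* scalar curvature tau(p) = sum_{i<j} K(e_i /\ e_j),
   K(e_i /\ e_j) = g(R(e_i,e_j)e_j, e_i) = Rn i j j i *)
Definition scal (R : realFieldType) (n : nat) (Rn : 'I_n -> 'I_n -> 'I_n -> 'I_n -> R)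
    : R :=
  \sum_(i < n) \sum_(j < n | (i < j)%N) Rn i j j i.

(* Main.v *)
Require Import Defs.
From HB Require Import structures.
From mathcomp Require Import all_boot all_order all_algebra.
From mathcomp Require Import ring lra.
Import Order.TTheory GRing.Theory Num.Theory.
Local Open Scope ring_scope.

Section G.
Context {R : realFieldType} {N : nat}.
Implicit Types (X Y Z : 'cV[R]_N).

Lemma gdotE X Y : gdot X Y = \sum_k X k 0 * Y k 0.
Proof. by rewrite /gdot mxE; apply: eq_bigr => k _; rewrite mxE. Qed.
Lemma gdotC X Y : gdot X Y = gdot Y X.
Proof. by rewrite !gdotE; apply: eq_bigr => k _; rewrite mulrC. Qed.
Lemma gdotDl X Y Z : gdot (X + Y) Z = gdot X Z + gdot Y Z.
Proof. by rewrite !gdotE -big_split; apply: eq_bigr => k _; rewrite mxE mulrDl. Qed.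
Lemma gdotNl X Z : gdot (- X) Z = - gdot X Z.
Proof. by rewrite !gdotE -sumrN; apply: eq_bigr => k _; rewrite mxE mulNr. Qed.
Lemma gdotBl X Y Z : gdot (X - Y) Z = gdot X Z - gdot Y Z.
Proof. by rewrite gdotDl gdotNl. Qed.
Lemma gdotZl a X Z : gdot (a *: X) Z = a * gdot X Z.
Proof. by rewrite !gdotE mulr_sumr; apply: eq_bigr => k _; rewrite mxE mulrA. Qed.
Lemma gdot0l Z : gdot 0 Z = 0.
Proof. by rewrite gdotE big1 // => k _; rewrite mxE mul0r. Qed.
Lemma gdotNr X Z : gdot X (- Z) = - gdot X Z.
Proof. by rewrite gdotC gdotNl gdotC. Qed.
Lemma gdotZr a X Z : gdot X (a *: Z) = a * gdot X Z.
Proof. by rewrite gdotC gdotZl gdotC. Qed.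
Lemma gdotBr X Y Z : gdot Z (X - Y) = gdot Z X - gdot Z Y.
Proof. by rewrite gdotC gdotBl !(gdotC Z). Qed.
Lemma gdot_suml I (r : seq I) (P : pred I) (F : I -> 'cV[R]_N) Y :
  gdot (\sum_(i <- r | P i) F i) Y = \sum_(i <- r | P i) gdot (F i) Y.
Proof. exact: (big_morph (fun X => gdot X Y) (fun X Z => gdotDl X Z Y) (gdot0l Y)). Qed.
Lemma gdot_sumr I (r : seq I) (P : pred I) (F : I -> 'cV[R]_N) Y :
  gdot Y (\sum_(i <- r | P i) F i) = \sum_(i <- r | P i) gdot Y (F i).
Proof. by rewrite gdotC gdot_suml; apply: eq_bigr => i _; rewrite gdotC. Qed.
Lemma gdot_ge0 X : 0 <= gdot X X.
Proof. by rewrite gdotE sumr_ge0 // => k _; rewrite -expr2 sqr_ge0. Qed.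

Lemma gskew (p : 'M[R]_N) : (forall X Y, gdot (p *m X) (p *m Y) = gdot X Y) ->
  p *m p = - 1%:M -> forall X Y, gdot (p *m X) Y = - gdot X (p *m Y).
Proof.
move=> H Hp X Y; have := H X (p *m Y).
by rewrite mulmxA Hp mulNmx mul1mx gdotNr => <-; rewrite opprK.
Qed.

Lemma gskew0 (p : 'M[R]_N) : (forall X Y, gdot (p *m X) Y = - gdot X (p *m Y)) ->
  forall X, gdot (p *m X) X = 0.
Proof. by move=> H X; have := H X X; rewrite gdotC; lra. Qed.

Lemma Kform (c k : R) (p1 p2 p3 : 'M[R]_N) (Q : 'cV[R]_N -> 'cV[R]_N) X Y :
  (forall X Y, gdot (p1 *m X) Y = - gdot X (p1 *m Y)) ->
  (forall X Y, gdot (p2 *m X) Y = - gdot X (p2 *m Y)) ->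
  (forall X Y, gdot (p3 *m X) Y = - gdot X (p3 *m Y)) ->
  gdot X X = 1 -> gdot Y Y = 1 -> gdot X Y = 0 ->
  gdot (Rstar c p1 p2 p3 X Y Y - k *: (gdot (Q Y) Y *: X - gdot (Q X) Y *: Y
     + gdot Y Y *: Q X - gdot X Y *: Q Y)) X
  = c * (1 + 3 * ((gdot (p1 *m X) Y)^+2 + (gdot (p2 *m X) Y)^+2 + (gdot (p3 *m X) Y)^+2))
    - k * (gdot (Q Y) Y + gdot (Q X) X).
Proof.
move=> s1 s2 s3 hX hY hXY.
have hYX : gdot Y X = 0 by rewrite gdotC.
have t p : (forall X Y, gdot (p *m X) Y = - gdot X (p *m Y)) ->
   gdot (p *m Y) X = - gdot (p *m X) Y by move=> s; rewrite s gdotC.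
rewrite /Rstar !big_cons big_nil.
rewrite !(gdotBl, gdotDl, gdotZl, gdotNl, gdot0l).
rewrite hX hY hXY hYX !(gskew0 _ s1) !(gskew0 _ s2) !(gskew0 _ s3) (t _ s1) (t _ s2) (t _ s3).
ring.
Qed.
End G.
Lemma gdot_sumlO (R : realFieldType) N n (F : 'I_n -> 'cV[R]_N) Y :
  gdot (\sum_(i < n) F i) Y = \sum_(i < n) gdot (F i) Y.
Proof. exact: gdot_suml. Qed.
Lemma gdot_sumrO (R : realFieldType) N n (F : 'I_n -> 'cV[R]_N) Y :
  gdot Y (\sum_(i < n) F i) = \sum_(i < n) gdot Y (F i).
Proof. exact: gdot_sumr. Qed.

Lemma sum_lt_sym (R : realFieldType) n (f : 'I_n -> 'I_n -> R) :
  (forall i j, f i j = f j i) ->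
  2 * \sum_(i < n) \sum_(j < n | (i < j)%N) f i j = \sum_(i < n) \sum_(j < n) f i j - \sum_(i < n) f i i.
Proof.
move=> fs.
have pw i j : f i j = (if (i < j)%N then f i j else 0) + (if (j < i)%N then f i j else 0)
   + (if j == i then f i i else 0).
  case: (ltngtP i j) => h.
  - have -> : (j == i) = false by apply/eqP => E; move: h; rewrite E ltnn.
    by rewrite !addr0.
  - have -> : (j == i) = false by apply/eqP => E; move: h; rewrite E ltnn.
    by rewrite add0r addr0.
  - have E : i = j by apply: val_inj.
    by rewrite E eqxx !add0r.
have -> : \sum_(i < n) \sum_(j < n) f i j = \sum_(i < n) \sum_(j < n) (if (i < j)%N then f i j else 0)
   + \sum_(i < n) \sum_(j < n) (if (j < i)%N then f i j else 0) + \sum_(i < n) f i i.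
  rewrite -!big_split; apply: eq_bigr => i _ /=.
  have -> : f i i = \sum_(j < n) (if j == i then f i i else 0) by rewrite -big_mkcond big_pred1_eq.
  rewrite -!big_split; apply: eq_bigr => j _.
  by rewrite [LHS]pw.
have -> : \sum_(i < n) \sum_(j < n) (if (j < i)%N then f i j else 0)
        = \sum_(i < n) \sum_(j < n) (if (i < j)%N then f i j else 0).
  rewrite exchange_big; apply: eq_bigr => i _; apply: eq_bigr => j _.
  by rewrite fs.
rewrite -!(eq_bigr _ (fun i _ => big_mkcond _ _)) /=.
by rewrite addrK; ring.
Qed.

Lemma cs_ineq (R : realFieldType) N n (v : 'I_n -> 'cV[R]_N) :
  gdot (\sum_(i < n) v i) (\sum_(i < n) v i) <= n%:R * \sum_(i < n) gdot (v i) (v i).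
Proof.
have H : 0 <= \sum_(i < n) \sum_(j < n) gdot (v i - v j) (v i - v j).
  by apply: sumr_ge0 => i _; apply: sumr_ge0 => j _; apply: gdot_ge0.
have e1 i j : gdot (v i - v j) (v i - v j) =
      gdot (v i) (v i) + gdot (v j) (v j) - 2 * gdot (v i) (v j).
  rewrite !(gdotBl, gdotBr) (gdotC (v j) (v i)). move: (gdot (v i) (v i)) (gdot (v i) (v j)) (gdot (v j) (v j)) => a b d; ring.
have e2 i : \sum_(j < n) gdot (v i - v j) (v i - v j) =
   gdot (v i) (v i) *+ n + \sum_(j < n) gdot (v j) (v j) - 2 * gdot (v i) (\sum_(j < n) v j).
  under eq_bigr => j _ do rewrite e1.
by rewrite sumrB big_split /= sumr_const card_ord gdot_sumrO -mulr_sumr.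
rewrite (eq_bigr _ (fun i _ => e2 i)) sumrB big_split /= sumr_const card_ord sumrMnl in H.
have Hs : \sum_(i<n) gdot (v i) (\sum_(j<n) v j) = gdot (\sum_(i<n) v i) (\sum_(j<n) v j) by rewrite gdot_sumlO.
rewrite -mulr_sumr Hs in H.
rewrite mulr_natl; move: H.
move: (gdot (\sum_(i < n) v i) (\sum_(i < n) v i)) ((\sum_(i < n) gdot (v i) (v i)) *+ n) => a b.
lra.
Qed.

Lemma final_alg (R : realFieldType) (n c NP T HH A Dd sc : R) : 1 < n ->
  2 * sc = (c * (n * n) + 3 * c * NP - 2 * (c * (n * (n - 1) + 3 * NP) / n) * n * T - HH + A)
           - (c * n - 2 * (c * (n * (n - 1) + 3 * NP) / n) * T) ->
  Dd <= HH -> A <= n * Dd ->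
  sc <= (n - 1) / 2 * (n * (n^-1 * (n^-1 * A)) + c * ((n - 1) + 3 * (NP / n))
           * ((n - 2 * T * (n - 1)) / (n - 1))).
Proof.
move=> hn E hD hA.
have n0 : n != 0 by apply/eqP => h; move: hn; rewrite h; lra.
have n1 : n - 1 != 0 by apply/eqP => h; move: hn; lra.
have Ad : A / n <= Dd by rewrite ler_pdivrMr; [rewrite mulrC | lra].
have -> : sc = ((c * (n * n) + 3 * c * NP - 2 * (c * (n * (n - 1) + 3 * NP) / n) * n * T - HH + A)
           - (c * n - 2 * (c * (n * (n - 1) + 3 * NP) / n) * T)) / 2 by lra.
set X := _ / 2.
have -> : (n - 1) / 2 * (n * (n^-1 * (n^-1 * A)) + c * ((n - 1) + 3 * (NP / n))
           * ((n - 2 * T * (n - 1)) / (n - 1))) = X + (HH - A / n) / 2.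
  rewrite /X; field; by rewrite n0 n1.
lra.
Qed.

Lemma dsumG (R : realFieldType) n (c k : R) (s H D G : 'I_n -> 'I_n -> R) (M : 'I_n -> R) :
  (forall i j, G i j = c + 3 * c * s i j - k * M j - k * M i - H i j + D i j) ->
  \sum_(i < n) \sum_(j < n) G i j =
  c * (n%:R * n%:R) + 3 * c * (\sum_(i < n) \sum_(j < n) s i j)
  - 2 * k * n%:R * (\sum_(i < n) M i)
  - \sum_(i < n) \sum_(j < n) H i j + \sum_(i < n) \sum_(j < n) D i j.
Proof.
move=> hG.
have e i : \sum_(j < n) G i j = c * n%:R + 3 * c * (\sum_(j < n) s i j) - k * (\sum_(j < n) M j)
   - k * M i * n%:R - \sum_(j < n) H i j + \sum_(j < n) D i j.
  under eq_bigr => j _ do rewrite hG.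
  rewrite big_split /= sumrB sumrB sumrB big_split /= !sumr_const card_ord.
  by rewrite -!mulr_sumr !mulr_natr.
rewrite (eq_bigr _ (fun i _ => e i)).
rewrite big_split /= sumrB sumrB sumrB big_split /= !sumr_const card_ord.
rewrite -!mulr_sumr -!mulr_suml -mulr_sumr.
move: (\sum_(i < n) \sum_(j < n) s i j) (\sum_(i < n) M i) (\sum_(i < n) \sum_(j < n) H i j)
   (\sum_(i < n) \sum_(j < n) D i j) => a b d f.
ring.
Qed.

Lemma dsumD (R : realFieldType) n (c k : R) (s H D : 'I_n -> 'I_n -> R) (M : 'I_n -> R) (G : 'I_n -> 'I_n -> R):
  (forall i j, G i j = c + 3 * c * s i j - k * M j - k * M i - H i j + D i j) ->
  (forall i, s i i = 0) -> (forall i, D i i = H i i) ->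
  \sum_(i < n) G i i = c * n%:R - 2 * k * (\sum_(i < n) M i).
Proof.
move=> hG hs hD.
have e i : G i i = c - 2 * k * M i by rewrite hG hs hD; ring.
rewrite (eq_bigr _ (fun i _ => e i)) sumrB sumr_const card_ord -mulr_sumr mulr_natr.
by [].
Qed.

Lemma diag_le (R : realFieldType) n (x : 'I_n -> 'I_n -> R) :
  (forall i j, 0 <= x i j) -> \sum_(i < n) x i i <= \sum_(i < n) \sum_(j < n) x i j.
Proof.
move=> hx; apply: ler_sum => i _; rewrite (bigD1 i) //= lerDl.
by apply: sumr_ge0 => j _.
Qed.

Lemma alg1 (R : realFieldType) (c k S Mj Mi r a b : R) :
  c * (1 + 3 * S) - k * (Mj + Mi) = r + a - b -> r = c + 3 * c * S - k * Mj - k * Mi - a + b.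
Proof. move=> E; have -> : r = c * (1 + 3 * S) - k * (Mj + Mi) - a + b by rewrite E; ring. ring. Qed.

Lemma alg2 (R : realFieldType) (c k S a b x y : R) :
  c + 3 * c * S - k * a - k * b - x + y = c + 3 * c * S - k * b - k * a - x + y.
Proof. ring. Qed.

Lemma sk2 {R : realFieldType} {N} {p : 'M[R]_N} :
  (forall X Y, gdot (p *m X) Y = - gdot X (p *m Y)) ->
  forall X Y, gdot (p *m Y) X ^+ 2 = gdot (p *m X) Y ^+ 2.
Proof. by move=> s X Y; rewrite s gdotC sqrrN. Qed.

Theorem theorem1 (R : realFieldType) (m n : nat) (c : R)
    (p1 p2 p3 : 'M[R]_(4 * m)) (P : 'cV[R]_(4 * m)) (DP : 'M[R]_(4 * m))
    (e : 'I_n -> 'cV[R]_(4 * m)) (h : 'I_n -> 'I_n -> 'cV[R]_(4 * m))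
    (Rn : 'I_n -> 'I_n -> 'I_n -> 'I_n -> R) :
  (2 <= n)%N ->
  p1 *m p1 = - 1%:M -> p2 *m p2 = - 1%:M -> p3 *m p3 = - 1%:M ->
  p1 *m p2 = p3 -> p2 *m p1 = - p3 ->
  p2 *m p3 = p1 -> p3 *m p2 = - p1 ->
  p3 *m p1 = p2 -> p1 *m p3 = - p2 ->
  (forall X Y, gdot (p1 *m X) (p1 *m Y) = gdot X Y) ->
  (forall X Y, gdot (p2 *m X) (p2 *m Y) = gdot X Y) ->
  (forall X Y, gdot (p3 *m X) (p3 *m Y) = gdot X Y) ->
  gdot P P = 1 ->
  (forall X, gdot (DP *m X) P = 0) ->
  (forall i j, gdot (e i) (e j) = (i == j)%:R) ->
  (forall i j, h i j = h j i) ->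
  (forall i j k, gdot (h i j) (e k) = 0) ->
  (forall i j k l,
     gdot (Rdd n c (tauprime c e p1 p2 p3) p1 p2 p3 P DP (e i) (e j) (e k)) (e l)
     = Rn i j k l + gdot (h i k) (h j l) - gdot (h i l) (h j k)) ->
  scal Rn <=
    (n%:R - 1) / 2 *
      (n%:R * gdot (meanH h) (meanH h)
       + c * ((n%:R - 1) + 3 * ((normP2 e p1 + normP2 e p2 + normP2 e p3) / n%:R))
           * ((n%:R - 2 * trM (tauprime c e p1 p2 p3) P DP e * (n%:R - 1)) / (n%:R - 1))).
Proof.
move=> hn h11 h22 h33 _ _ _ _ _ _ H1 H2 H3 _ _ he hs _ hG.
have s1 := gskew p1 H1 h11; have s2 := gskew p2 H2 h22; have s3 := gskew p3 H3 h33.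
set tp := tauprime c e p1 p2 p3.
set k := tp / n%:R.
pose s i j := gdot (p1 *m e i) (e j) ^+ 2 + gdot (p2 *m e i) (e j) ^+ 2
              + gdot (p3 *m e i) (e j) ^+ 2.
pose M i := gdot (Qop n tp P DP (e i)) (e i).
pose G i j := c + 3 * c * s i j - k * M j - k * M i - gdot (h i j) (h j i)
              + gdot (h i i) (h j j).
have hG' i j : G i j = c + 3 * c * s i j - k * M j - k * M i - gdot (h i j) (h j i)
              + gdot (h i i) (h j j) by [].
have he1 i : gdot (e i) (e i) = 1 by rewrite he eqxx.
have A : scal Rn = \sum_(i < n) \sum_(j < n | (i < j)%N) G i j.
  rewrite /scal; apply: eq_bigr => i _; apply: eq_bigr => j lij.
  have nij : i != j by apply/eqP => E; move: lij; rewrite E ltnn.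
  have hij : gdot (e i) (e j) = 0 by rewrite he (negbTE nij).
  have K := Kform c k p1 p2 p3 (Qop n tp P DP) (e i) (e j) s1 s2 s3 (he1 i) (he1 j) hij.
  have Hg := hG i j j i.
  rewrite /Rdd /Mform K in Hg.
  exact: alg1 Hg.
have Gs i j : G i j = G j i.
  rewrite /G.
  have -> : s j i = s i j by rewrite /s (sk2 s1) (sk2 s2) (sk2 s3).
  rewrite (hs j i) (gdotC (h j j)).
  exact: alg2.
have E2 := @sum_lt_sym R n G Gs.
rewrite -A in E2.
have DG := @dsumG R n c k s (fun i j => gdot (h i j) (h j i)) (fun i j => gdot (h i i) (h j j)) G M hG'.
have hsii i : s i i = 0.
  by rewrite /s (gskew0 _ s1) (gskew0 _ s2) (gskew0 _ s3) expr2 mul0r !addr0.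
have DD := @dsumD R n c k s (fun i j => gdot (h i j) (h j i)) (fun i j => gdot (h i i) (h j j)) M G hG' hsii (fun i => erefl).
cbv beta in DG. cbv beta in DD.
rewrite DG DD in E2.
have sNP : \sum_(i < n) \sum_(j < n) s i j = normP2 e p1 + normP2 e p2 + normP2 e p3.
  rewrite /normP2 -!big_split /=; apply: eq_bigr => i _; rewrite -!big_split /=.
  by apply: eq_bigr.
have DA : \sum_(i < n) \sum_(j < n) gdot (h i i) (h j j) = gdot (\sum_(i < n) h i i) (\sum_(i < n) h i i).
  rewrite gdot_sumlO; apply: eq_bigr => i _; by rewrite gdot_sumrO.
rewrite sNP DA in E2.
have HD := @diag_le R n (fun i j => gdot (h i j) (h j i)).
have HD' : \sum_(i < n) gdot (h i i) (h i i) <= \sum_(i < n) \sum_(j < n) gdot (h i j) (h j i).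
  by apply: HD => i j /=; rewrite (hs j i); apply: gdot_ge0.
have cs := @cs_ineq R _ n (fun i => h i i).
cbv beta in cs.
have n1 : 1 < (n%:R : R) by rewrite ltr1n.
have F := @final_alg R n%:R c (normP2 e p1 + normP2 e p2 + normP2 e p3) (\sum_(i<n) M i)
   (\sum_(i < n) \sum_(j < n) gdot (h i j) (h j i)) (gdot (\sum_(i < n) h i i) (\sum_(i < n) h i i))
   (\sum_(i < n) gdot (h i i) (h i i)) (scal Rn) n1 E2 HD' cs.
rewrite /meanH gdotZl gdotZr.
exact: F.
Qed.
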